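(* Let $G$ be a finite group. The poset $\widetilde\Pi(G)$ is isomorphic to $C_2$ if and only if, for some prime $p$, either $G$ is a cyclic group of order $p$, or $G$ is an elementary abelian $p$-group, or $G$ has a subgroup isomorphic to $\mathrm{Heis}(\mathbb{Z}_p)$ and $\exp(G)=p$.
   Context: For a finite group $G$ and a subgroup $H\le G$, let $\pi_e(H)=\{o(x)\mid x\in H\}$. Let $\mathcal{L}(G)$ be the set of subgroups of $G$; define $H_1\equiv H_2$ iff $\pi_e(H_1)=\pi_e(H_2)$, with class $[H]$. The poset $\widetilde\Pi(G)$ is $\mathcal{L}(G)/\!\equiv$ ordered by $[H_1]\lesssim[H_2]$ iff $\pi_e(H_1)\subseteq\pi_e(H_2)$. $C_2$ denotes the chain with two elements. $\exp(G)$ is the exponent of $G$, the least positive integer $m$ with $g^m=e$ for all $g\in G$. For an odd prime $p$, $\mathrm{Heis}(\mathbb{Z}_p)$ denotes the group of upper unitriangular $3\times 3$ matrices over $\mathbb{Z}_p$ (the unique, up to isomorphism, nonabelian group of order $p^3$ and exponent $p$). *)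

(* Defs.v *)
From mathcomp Require Import all_boot all_order all_algebra all_fingroup all_solvable.
Set Implicit Arguments. Unset Strict Implicit. Unset Printing Implicit Defensive.
Import GRing.Theory.

Definition pi_e (gT : finGroupType) (H : {set gT}) : pred nat :=
  [pred n | [exists x in H, #[x]%g == n]].

Definition C2_le (a b : bool) : bool := a ==> b.

(* Pi~(G) ~= C_2 : an order isomorphism from the quotient poset
   L(G)/== (ordered by inclusion of pi_e) onto C_2, presented as a map on
   subgroups of G that is surjective and reflects/preserves the preorder
   (hence factors through == and is a poset isomorphism of the quotient). *)
Definition PiTilde_iso_C2 (gT : finGroupType) (G : {group gT}) : Prop :=
  exists f : {group gT} -> bool,
    (forall b : bool, exists H : {group gT}, H \subset G /\ f H = b) /\
    (forall H1 H2 : {group gT}, H1 \subset G -> H2 \subset G ->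
       ({subset pi_e H1 <= pi_e H2} <-> C2_le (f H1) (f H2))).

Definition Heis (p : nat) : {set {'GL_3['F_p]}} :=
  [set g : {'GL_3['F_p]} |
     [forall i : 'I_3, forall j : 'I_3,
        ((j < i)%N ==> (GLval g i j == 0%R)) && ((i == j) ==> (GLval g i j == 1%R))]].

(* Main.v *)
Require Import Defs.
From mathcomp Require Import all_boot all_order all_algebra all_fingroup all_solvable.
From mathcomp Require Import ring.
Set Implicit Arguments. Unset Strict Implicit. Unset Printing Implicit Defensive.
Import GRing.Theory.
Local Open Scope ring_scope.

Local Open Scope group_scope.
Lemma L1 (gT : finGroupType) (p : nat) (x z : gT) : prime p ->
  x ^+ p = 1 -> z ^+ p = 1 -> commute [~ x, z] x -> commute [~ x, z] z ->
  [~ x, z] != 1 -> p^{1+2} \isog (<[x]> <*> <[z]>).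
Proof.
move=> pr xp zp cx cz nt.
have isoP := Grp_pX1p2 pr.
set H := (<[x]> <*> <[z]>)%G.
have homH : H \homg p^{1+2}.
  rewrite isoP; apply/existsP; exists (x, z); rewrite /= !xpair_eqE /=.
  rewrite xp zp !eqxx /=.
by apply/andP; split; apply/commgP.
case/homgP: homH => f fim.
apply/isogP; exists f => //.
have esP := pX1p2_extraspecial pr.
have [[_ defD] _] := esP.
apply/negPn/negP => ninj.
have ntK : 'ker f :!=: 1.
  by apply: contra ninj => /eqP ->; apply/subsetP.
have := meet_center_nil (pgroup_nil (pX1p2_pgroup pr)) (ker_normal f) ntK.
have oZ := card_center_extraspecial (pX1p2_pgroup pr) esP.
case: (boolP ('Z(p^{1+2}) \subset 'ker f)) => [sZK | nsZK]; last first.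
  by rewrite setIC (prime_TIg _ nsZK) ?oZ ?eqxx.
move=> _; apply/negP: nt; rewrite negbK.
have : [~ x, z] \in H^`(1).
  by apply: mem_commg; [apply: mem_gen; rewrite inE cycle_id | apply: mem_gen; rewrite inE cycle_id orbT].
rewrite -fim -morphim_der // defD.
have -> : f @* 'Z(p^{1+2}) = 1.
  by apply/trivgP; rewrite -(morphim_ker f) morphimS.
by rewrite inE.
Qed.
Local Close Scope group_scope.

Section HeisSec.
Variable p : nat.
Local Notation F := 'F_p.

Definition mkH (a b c : F) : 'M[F]_3 :=
  \matrix_(i < 3, j < 3)
    match nat_of_ord i, nat_of_ord j with
    | 0, 0 | 1, 1 | 2, 2 => 1%R
    | 0, 1 => a | 1, 2 => b | 0, 2 => c | _, _ => 0%R end.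

Lemma mkHM a b c a' b' c' :
  (mkH a b c *m mkH a' b' c' = mkH (a + a') (b + b') (c + a * b' + c'))%R.
Proof.
apply/matrixP => i j; rewrite !mxE !big_ord_recr big_ord0 /= !mxE.
case: i => [[|[|[|i]]] Hi] //; case: j => [[|[|[|j]]] Hj] //=; ring.
Qed.

Lemma mkH1 : mkH 0 0 0 = 1%:M.
Proof.
apply/matrixP => i j; rewrite !mxE.
by case: i => [[|[|[|i]]] Hi] //; case: j => [[|[|[|j]]] Hj].
Qed.

Lemma mkH_unit a b c : mkH a b c \in unitmx.
Proof.
have [|//] := @mulmx1_unit _ _ (mkH a b c) (mkH (- a) (- b) (a * b - c)).
rewrite mkHM -mkH1; congr mkH; ring.
Qed.

Definition gH a b c : {'GL_3[F]} := Sub (mkH a b c) (mkH_unit a b c).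

Lemma gHE a b c : GLval (gH a b c) = mkH a b c. Proof. by []. Qed.

Lemma gHM a b c a' b' c' :
  (gH a b c * gH a' b' c' = gH (a + a') (b + b') (c + a * b' + c'))%g.
Proof. by apply: val_inj; exact: mkHM. Qed.

Lemma gH1 : gH 0 0 0 = 1%g.
Proof. by apply: val_inj; exact: mkH1. Qed.

Lemma gH_inj a b c a' b' c' : gH a b c = gH a' b' c' -> (a, b, c) = (a', b', c').
Proof.
move/(congr1 GLval); rewrite !gHE => /matrixP E.
have := E 0 1; have := E 1 2; have := E 0 2; rewrite !mxE /= => -> -> ->. done.
Qed.

Lemma HeisE g : (g \in Heis p) = [exists abc : F * F * F, g == gH abc.1.1 abc.1.2 abc.2].
Proof.
apply/idP/existsP.
  rewrite inE => /forallP H.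
  exists (GLval g 0 1, GLval g 1 2, GLval g 0 2); apply/eqP/val_inj.
  apply/matrixP => i j; rewrite mxE.
  have := forallP (H i) j; case/andP => /implyP H1 /implyP H2.
  case: i H1 H2 => [[|[|[|i]]] Hi] //; case: j => [[|[|[|j]]] Hj] //= H1 H2;
   first [ by apply/eqP/H2 | by apply/eqP/H1 | by congr (GLval g _ _); apply: val_inj ].
case=> [[[a b] c]] /= /eqP ->; rewrite inE.
apply/forallP => i; apply/forallP => j; rewrite gHE !mxE.
by case: i => [[|[|[|i]]] Hi] //; case: j => [[|[|[|j]]] Hj].
Qed.

Hypothesis pr : prime p.

Lemma gHV a b c : ((gH a b c)^-1 = gH (- a) (- b) (a * b - c))%g.
Proof. by apply/eqP; rewrite eq_invg_mul gHM -gH1; apply/eqP; congr gH; ring. Qed.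

Lemma Heis_group : group_set (Heis p).
Proof.
apply/group_setP; split.
  by rewrite HeisE; apply/existsP; exists (0, 0, 0); rewrite gH1.
move=> x y; rewrite !HeisE => /existsP[[[a b] c] /eqP ->] /existsP[[[a' b'] c'] /eqP ->].
by apply/existsP; exists (a + a', b + b', c + a * b' + c'); rewrite /= gHM.
Qed.

Definition HeisG := Group Heis_group.

Lemma card_Heis : #|Heis p| = (p ^ 3)%N.
Proof.
have -> : Heis p = [set gH abc.1.1 abc.1.2 abc.2 | abc in [set: F * F * F]].
  apply/setP => g; rewrite HeisE; apply/existsP/imsetP.
    by case=> abc /eqP ->; exists abc.
  by case=> abc _ ->; exists abc.
rewrite card_imset; last first.
  by move=> [[a b] c] [[a' b'] c'] /= /gH_inj.
by rewrite cardsT !card_prod card_Fp // -mulnA.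
Qed.

Lemma gHXa a n : ((gH a 0 0) ^+ n = gH (a *+ n) 0 0)%g.
Proof.
elim: n => [|n IH]; first by rewrite expg0 mulr0n gH1.
by rewrite expgSr IH gHM mulrSr; congr gH; ring.
Qed.

Lemma gHXb b n : ((gH 0 b 0) ^+ n = gH 0 (b *+ n) 0)%g.
Proof.
elim: n => [|n IH]; first by rewrite expg0 mulr0n gH1.
by rewrite expgSr IH gHM mulrSr; congr gH; ring.
Qed.

Lemma Heis_iso : (p^{1+2} \isog HeisG)%g.
Proof.
set u := gH 1 0 0; set v := gH 0 1 0.
have ecomm : [~ u, v]%g = gH 0 0 1.
  by rewrite /commg /conjg !gHV !gHM; congr gH; ring.
have up : (u ^+ p = 1)%g by rewrite gHXa -gH1 pchar_Fp_0.
have vp : (v ^+ p = 1)%g by rewrite gHXb -gH1 pchar_Fp_0.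
have cu : commute [~ u, v]%g u by rewrite ecomm /commute !gHM; congr gH; ring.
have cv : commute [~ u, v]%g v by rewrite ecomm /commute !gHM; congr gH; ring.
have nt : ([~ u, v] != 1)%g.
  by rewrite ecomm -gH1; apply/eqP => /gH_inj [] /eqP; rewrite oner_eq0.
have iso := L1 pr up vp cu cv nt.
suff <- : (<[u]> <*> <[v]>)%G = HeisG by [].
apply: val_inj => /=; apply/eqP; rewrite eqEcard; apply/andP; split.

  rewrite -[Heis p]/(gval HeisG) join_subG !cycle_subG /= !HeisE; apply/andP; split; apply/existsP.
    by exists (1, 0, 0).
  by exists (0, 1, 0).
by rewrite -(card_isog iso) card_pX1p2 // card_Heis.
Qed.

End HeisSec.

Local Close Scope ring_scope.
Local Open Scope group_scope.

Lemma L2 (gT : finGroupType) (G : {group gT}) : nilpotent G -> ~~ abelian G ->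
  exists x z, [/\ x \in G, z \in G, [~ x, z] != 1, commute [~ x, z] x & commute [~ x, z] z].
Proof.
move=> nilG nabG.
have nZG : G \subset 'N('Z(G)) by apply: normal_norm; apply: center_normal.
have ntQ : G / 'Z(G) != 1.
  apply: contra nabG => /eqP Q1.
  have : G \subset 'Z(G) by rewrite -quotient_sub1 // Q1.
  by move=> sGZ; apply/centsP => x Gx y Gy; have /centerP[_ ] := subsetP sGZ y Gy; move=> c; apply/esym; apply: c.
have nilQ : nilpotent (G / 'Z(G)) by apply: quotient_nil.
have : 'Z(G / 'Z(G)) != 1 by rewrite center_nil_eq1.
case/trivgPn => w Zw ntw.
have Qw : w \in G / 'Z(G) by move: Zw; rewrite inE => /andP[].
case/morphimP: Qw => z Nz Gz defw.
have nZz : z \notin 'Z(G).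
  by apply: contra ntw => Zz; rewrite defw /= coset_id.
have : [exists x in G, [~ x, z] != 1].
  apply: contraR nZz => /existsPn H; rewrite inE Gz /=.
  apply/centP => x Gx; have := H x; rewrite Gx /= negbK => /commgP.
  by move=> c; apply/esym.
case/existsP => x /andP[Gx ntc].
have Zc : [~ x, z] \in 'Z(G).
  apply: coset_idr; first by apply: groupR; apply: (subsetP nZG).
  rewrite morphR //; try by apply: (subsetP nZG).
  rewrite -defw; apply/eqP/commgP.
  have /centerP[_ cw] := Zw; apply/esym; apply: cw.
  by rewrite mem_quotient.
have /centerP[_ cc] := Zc.
exists x, z; split=> //; apply: cc => //.
Qed.

Lemma pi_e_exp (gT : finGroupType) (G H : {group gT}) p : prime p -> exponent G = p ->
  H \subset G -> forall n, (n \in pi_e H) = (n == 1%N) || ((n == p) && (H :!=: 1)).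
Proof.
move=> pr eG sHG n; rewrite /pi_e inE.
apply/existsP/idP.
  case=> x /andP[Hx /eqP <-].
  have : #[x] %| p by rewrite -eG dvdn_exponent // (subsetP sHG).
  case: (boolP (#[x] == 1%N)) => [_ _ | nt1]; first by [].
  move/(prime_nt_dvdP pr nt1) => ->; rewrite eqxx /=.
  by apply/trivgPn; exists x => //; rewrite -order_eq1.
case/orP => [/eqP -> | /andP[/eqP -> /trivgPn[x Hx ntx]]].
  by exists 1; rewrite group1 order1.
exists x; rewrite Hx /=; apply/eqP/prime_nt_dvdP => //.
  by rewrite order_eq1.
by rewrite -eG dvdn_exponent // (subsetP sHG).
Qed.

Local Close Scope group_scope.

Theorem theorem2p2 (gT : finGroupType) (G : {group gT}) :
  PiTilde_iso_C2 G <->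
  exists p : nat, prime p /\
    [\/ cyclic G /\ #|G| = p,
        (p.-abelem G)%g /\ G :!=: 1%G
      | (exists H : {group gT}, [/\ H \subset G, odd p & Heis p \isog H])
        /\ exponent G = p].
Proof.
Local Open Scope group_scope.
split.
- case=> f [fsurj fiso].
  have sub1 : (1%G : {group gT}) \subset G := sub1G G.
  have pi1 : forall H : {group gT}, {subset pi_e (1%G : {group gT}) <= pi_e H}.
    move=> H n; rewrite /pi_e !inE => /existsP[x /andP[x1 /eqP <-]].
    apply/existsP; exists 1; rewrite inE in x1; rewrite (eqP x1) group1 /=.
    by rewrite order1.
  have f1 : f 1%G = false.
    case: (fsurj false) => H [sHG fH].
    have := (fiso _ _ sub1 sHG).1 (pi1 H); rewrite /C2_le fH.
    by case: (f 1%G).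
  have fE : forall K : {group gT}, K \subset G -> f K = (K :!=: 1).
    move=> K sKG; case: (boolP (K :==: 1)) => [/eqP K1 | ntK].
      have S : {subset pi_e K <= pi_e (1%G : {group gT})} by rewrite K1.
      have := (fiso K 1%G sKG sub1).1 S; rewrite f1 /C2_le.
      by case: (f K).
    case fK: (f K) => //.
    have := (fiso K 1%G sKG sub1).2; rewrite fK f1 /C2_le => /(_ isT) S.
    case/trivgPn: ntK => x Kx ntx.
    have : #[x] \in pi_e (1%G : {group gT}).
      by apply: S; rewrite /pi_e inE; apply/existsP; exists x; rewrite Kx eqxx.
    rewrite /pi_e inE => /existsP[y /andP[y1 /eqP oy]].
    rewrite inE in y1; rewrite (eqP y1) order1 in oy.
    by move: ntx; rewrite -order_eq1 -oy eqxx.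
  have [H [sHG fH]] := fsurj true.
  have ntG : G :!=: 1.
    rewrite fE // in fH; apply/trivgPn; case/trivgPn: fH => x Hx ntx.
    by exists x => //; apply: (subsetP sHG).
  have ltG : (1 < #|G|)%N by rewrite cardG_gt1.
  set p := pdiv #|G|.
  have pr : prime p := pdiv_prime ltG.
  have [x Gx ox] := Cauchy pr (pdiv_dvd _).
  have ntX : <[x]>%G :!=: 1.
    by rewrite /= cycle_eq1 -order_eq1 ox; case: eqP pr => // ->.
  have sX : <[x]>%G \subset G by rewrite cycle_subG.
  have expp : forall y, y \in G -> (y ^+ p = 1)%g.
    move=> y Gy; case: (eqVneq y 1) => [-> | nty]; first by rewrite expg1n.
    have sY : <[y]>%G \subset G by rewrite cycle_subG.
    have ntY : <[y]>%G :!=: 1 by rewrite /= cycle_eq1.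
    have := (fiso <[y]>%G <[x]>%G sY sX).2; rewrite !fE // ntY ntX /C2_le.
    move=> /(_ isT) S.
    have : #[y] \in pi_e <[x]>%G.
      by apply: S; rewrite /pi_e inE; apply/existsP; exists y; rewrite cycle_id eqxx.
    rewrite /pi_e inE => /existsP[z /andP[Xz /eqP ozy]].
    apply/eqP; rewrite -order_dvdn -ozy -ox [#[x]]orderE.
    exact: order_dvdG.
  have eG : exponent G = p.
    apply/eqP; rewrite eqn_dvd; apply/andP; split.
      by apply/exponentP; exact: expp.
    by rewrite -ox dvdn_exponent.
  exists p; split => //.
  case: (even_prime pr) => [p2 | podd].
    apply: Or32; split => //; rewrite p2; apply: exponent2_abelem.
    by rewrite eG p2.
  case: (boolP (abelian G)) => abG.
    by apply: Or32; split => //; apply/abelemP => //; split.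
  apply: Or33; split => //.
  have nilG : nilpotent G.
    by apply: (@pgroup_nil _ p); rewrite -pnat_exponent eG pnat_id.
  have [a [z [Ga Gz ntc ca cz]]] := L2 nilG abG.
  have iso1 := L1 pr (expp a Ga) (expp z Gz) ca cz ntc.
  exists (<[a]> <*> <[z]>)%G; split => //.
    by rewrite join_subG !cycle_subG Ga Gz.
  have iso2 := Heis_iso pr.
  exact: isog_trans (isog_symr iso2) iso1.
- case=> p [pr H].
  have [eG ntG] : exponent G = p /\ G :!=: 1.
    case: H => [[cG oG] | [abG ntG] | [_ eG]].
    + split; first by rewrite exponent_cyclic.
      by rewrite -cardG_gt1 oG prime_gt1.
    + split => //; case/(abelemP pr): abG => _ ex.
      apply/(prime_nt_dvdP pr).
        by rewrite -dvdn1 -trivg_exponent.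
      by apply/exponentP.
    + split => //.
      by rewrite trivg_exponent eG dvdn1; case: eqP pr => // ->.
  exists (fun H : {group gT} => H :!=: 1); split.
    case; [exists G | exists 1%G]; split => //; first exact: sub1G.
    by rewrite /= eqxx.
  move=> H1 H2 s1 s2; rewrite /C2_le; split.
    move=> S; apply/implyP => nt1.
    have : p \in pi_e H1 by rewrite (pi_e_exp pr eG s1) eqxx nt1 orbT.
    move/S; rewrite (pi_e_exp pr eG s2) => /orP[/eqP p1 | /andP[_ ->]] //.
    by rewrite p1 in pr.
  move=> I n; rewrite (pi_e_exp pr eG s1) (pi_e_exp pr eG s2).
  case/orP => [-> // | /andP[-> nt]].
  by rewrite (implyP I nt) orbT.
Qed.
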